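(* Let $q\ge1$, $d=2^q$. Each of the following subspaces $W$ of $\mathcal{M}_d^{\otimes 2}$ satisfies $\varphi^{\otimes 2}(C)W\subseteq W$ for all $C\in\mathcal{C}_q$ (some of them may be $0$ for $q=1$): $V_{\mathrm{id}}=\mathrm{span}\{\sigma_0\otimes\sigma_0\}$, $V_{\mathrm r}=\mathrm{span}\{\sigma_0\otimes\tau:\tau\in\boldsymbol{\sigma}_q\}$, $V_{\mathrm l}=\mathrm{span}\{\tau\otimes\sigma_0:\tau\in\boldsymbol{\sigma}_q\}$, $V_{\mathrm d}=\mathrm{span}\{\tau\otimes\tau:\tau\in\boldsymbol{\sigma}_q\}$, $V_{[\mathrm S]}=\mathrm{span}\{S_{\sigma,\tau}:\tau\in\boldsymbol{\sigma}_q,\sigma\in\boldsymbol{C}_\tau\}$, $V_{\{\mathrm S\}}=\mathrm{span}\{S_{\sigma,\tau}:\tau\in\boldsymbol{\sigma}_q,\sigma\in\boldsymbol{N}_\tau\}$, $V_{[\mathrm A]}=\mathrm{span}\{A_{\sigma,\tau}:\tau\in\boldsymbol{\sigma}_q,\sigma\in\boldsymbol{C}_\tau\}$, $V_{\{\mathrm A\}}=\mathrm{span}\{A_{\sigma,\tau}:\tau\in\boldsymbol{\sigma}_q,\sigma\in\boldsymbol{N}_\tau\}$.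
   Context: $\mathcal{M}_d$ is the space of complex $d\times d$ matrices. $X,Y,Z$ are the single-qubit Pauli matrices; $\hat{\mathcal{P}}_q$ is the set of $q$-fold tensor products of elements of $\{\mathbb{1},X,Y,Z\}$. Set $\sigma_0=\mathbb{1}/\sqrt d$, $\boldsymbol{\sigma}_q=\{P/\sqrt d:P\in\hat{\mathcal P}_q\setminus\{\mathbb 1\}\}$. For $\tau\in\boldsymbol{\sigma}_q$: $\boldsymbol{N}_\tau=\{\sigma\in\boldsymbol{\sigma}_q:\sigma\tau+\tau\sigma=0\}$, $\boldsymbol{C}_\tau=\{\sigma\in\boldsymbol{\sigma}_q\setminus\{\tau\}:\sigma\tau=\tau\sigma\}$. For $\sigma\ne\tau$ in $\boldsymbol{\sigma}_q$, $S_{\sigma,\tau}=\frac{1}{\sqrt2}(\sigma\otimes\tau+\tau\otimes\sigma)$ and $A_{\sigma,\tau}=\frac{1}{\sqrt2}(\sigma\otimes\tau-\tau\otimes\sigma)$. The Pauli group $\mathcal{P}_q\subset U(2^q)$ consists of all $q$-fold tensor products of elements of the group generated by $X,Z,i\mathbb 1_2$; the Clifford group is $\mathcal{C}_q=\{U\in U(2^q):U\mathcal{P}_qU^\dagger\subseteq\mathcal{P}_q\}/U(1)$. The two-copy representation of $\mathcal C_q$ on $\mathcal{M}_d^{\otimes2}$ is given by $\varphi^{\otimes2}(C)(A\otimes B)=(CAC^\dagger)\otimes(CBC^\dagger)$, extended linearly (independent of the phase of $C$). *)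

(* Defs.v *)
From HB Require Import structures.
From mathcomp Require Import all_boot all_order all_algebra all_field.
From mathcomp Require Export mxtens.
Set Implicit Arguments. Unset Strict Implicit. Unset Printing Implicit Defensive.
Import Order.TTheory GRing.Theory Num.Theory.
Local Open Scope ring_scope.

Definition adjm {m n} (A : 'M[algC]_(m, n)) : 'M[algC]_(n, m) := (map_mx Num.conj A)^T.

Definition unitary {n} (U : 'M[algC]_n) : Prop := U *m adjm U = 1%:M.

Definition pX : 'M[algC]_2 := \matrix_(i < 2, j < 2) (if i == j then 0 else 1).
Definition pY : 'M[algC]_2 :=
  \matrix_(i < 2, j < 2) (if i == j then 0 else if i == 0 then - 'i else 'i).
Definition pZ : 'M[algC]_2 :=
  \matrix_(i < 2, j < 2) (if i == j then (if i == 0 then 1 else -1) else 0).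

Definition pauli1 (a : 'I_4) : 'M[algC]_2 :=
  match val a with 0 => 1%:M | 1 => pX | 2 => pY | _ => pZ end.

Fixpoint tens (q : nat) (f : nat -> 'M[algC]_2) : 'M[algC]_(2 ^ q) :=
  match q return 'M[algC]_(2 ^ q) with
  | 0 => 1%:M
  | q'.+1 => castmx (esym (expnS 2 q'), esym (expnS 2 q'))
               (f 0%N *t tens q' (fun n => f n.+1))
  end.

(* Pauli string (element of \hat P_q) indexed by p : 'I_q -> {1,X,Y,Z} *)
Definition pstr (q : nat) (p : {ffun 'I_q -> 'I_4}) : 'M[algC]_(2 ^ q) :=
  tens q (fun n => pauli1 (odflt ord0 (omap p (insub n)))).

Definition pid (q : nat) : {ffun 'I_q -> 'I_4} := [ffun _ => ord0].

Inductive in_gen1 : 'M[algC]_2 -> Prop :=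
  | gen1X : in_gen1 pX
  | gen1Z : in_gen1 pZ
  | gen1i : in_gen1 ('i%:M)
  | gen1M A B : in_gen1 A -> in_gen1 B -> in_gen1 (A *m B).

Definition pauli_group (q : nat) (M : 'M[algC]_(2 ^ q)) : Prop :=
  exists f : nat -> 'M[algC]_2,
    (forall j, (j < q)%N -> in_gen1 (f j)) /\ M = tens q f.

(* representatives of the Clifford group C_q (the U(1) phase is irrelevant) *)
Definition clifford (q : nat) (C : 'M[algC]_(2 ^ q)) : Prop :=
  unitary C /\
  forall P, pauli_group P -> pauli_group (C *m P *m adjm C).

(* M_d (x) M_d is identified with 'M_(d*d) via the Kronecker product;
   phi2 C is the linear map with phi2 C (A *t B) = (C A C^+) *t (C B C^+) *)
Definition phi2 (q : nat) (C : 'M[algC]_(2 ^ q)) (X : 'M[algC]_(2 ^ q * 2 ^ q))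
  : 'M[algC]_(2 ^ q * 2 ^ q) := (C *t C) *m X *m adjm (C *t C).

Definition dim (q : nat) : algC := (2 ^ q)%:R.

Definition sigma0 (q : nat) : 'M[algC]_(2 ^ q) := (sqrtC (dim q))^-1 *: 1%:M.
Definition sigma (q : nat) (p : {ffun 'I_q -> 'I_4}) : 'M[algC]_(2 ^ q) :=
  (sqrtC (dim q))^-1 *: pstr p.

(* the index set of boldsymbol sigma_q : non-identity Pauli strings *)
Definition nonid (q : nat) : seq {ffun 'I_q -> 'I_4} :=
  [seq p <- enum {ffun 'I_q -> 'I_4} | p != pid q].

(* sigma in N_tau  /  sigma in C_tau (as matrices) *)
Definition anticommutes q (s t : 'M[algC]_(2 ^ q)) : bool := s *m t + t *m s == 0.
Definition commutes_ne q (s t : 'M[algC]_(2 ^ q)) : bool := (s != t) && (s *m t == t *m s).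

Definition Smx q (s t : 'M[algC]_(2 ^ q)) : 'M[algC]_(2 ^ q * 2 ^ q) :=
  (sqrtC 2)^-1 *: (s *t t + t *t s).
Definition Amx q (s t : 'M[algC]_(2 ^ q)) : 'M[algC]_(2 ^ q * 2 ^ q) :=
  (sqrtC 2)^-1 *: (s *t t - t *t s).

Definition Vid q : {vspace 'M[algC]_(2 ^ q * 2 ^ q)} :=
  <<[:: sigma0 q *t sigma0 q]>>%VS.
Definition Vr q : {vspace 'M[algC]_(2 ^ q * 2 ^ q)} :=
  <<[seq sigma0 q *t sigma t | t <- nonid q]>>%VS.
Definition Vl q : {vspace 'M[algC]_(2 ^ q * 2 ^ q)} :=
  <<[seq sigma t *t sigma0 q | t <- nonid q]>>%VS.
Definition Vd q : {vspace 'M[algC]_(2 ^ q * 2 ^ q)} :=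
  <<[seq sigma t *t sigma t | t <- nonid q]>>%VS.
Definition VSc q : {vspace 'M[algC]_(2 ^ q * 2 ^ q)} :=
  <<[seq Smx (sigma s) (sigma t) | t <- nonid q,
       s <- [seq s <- nonid q | commutes_ne (sigma s) (sigma t)]]>>%VS.
Definition VSa q : {vspace 'M[algC]_(2 ^ q * 2 ^ q)} :=
  <<[seq Smx (sigma s) (sigma t) | t <- nonid q,
       s <- [seq s <- nonid q | anticommutes (sigma s) (sigma t)]]>>%VS.
Definition VAc q : {vspace 'M[algC]_(2 ^ q * 2 ^ q)} :=
  <<[seq Amx (sigma s) (sigma t) | t <- nonid q,
       s <- [seq s <- nonid q | commutes_ne (sigma s) (sigma t)]]>>%VS.
Definition VAa q : {vspace 'M[algC]_(2 ^ q * 2 ^ q)} :=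
  <<[seq Amx (sigma s) (sigma t) | t <- nonid q,
       s <- [seq s <- nonid q | anticommutes (sigma s) (sigma t)]]>>%VS.

Definition phi_invariant q (C : 'M[algC]_(2 ^ q)) (W : {vspace 'M[algC]_(2 ^ q * 2 ^ q)}) : Prop :=
  forall X, X \in W -> phi2 C X \in W.

(* Main.v *)
Require Import Defs.
From HB Require Import structures.
From mathcomp Require Import all_boot all_order all_algebra all_field.
From mathcomp Require Import mxtens.
Set Implicit Arguments. Unset Strict Implicit. Unset Printing Implicit Defensive.
Import Order.TTheory GRing.Theory Num.Theory.
Local Open Scope ring_scope.

Lemma sqi : 'i * 'i = -1 :> algC. Proof. by rewrite -expr2 sqrCi. Qed.

Ltac arith := rewrite ?mulr0 ?mul0r ?mulr1 ?mul1r ?add0r ?addr0 ?mulrN ?mulNr ?sqi ?opprK ?oppr0;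
  rewrite ?mulr0 ?mul0r ?mulr1 ?mul1r ?add0r ?addr0 ?mulrN ?mulNr ?sqi ?opprK ?oppr0.

Ltac mx2 := apply/matrixP=> [[[|[|//]]] ?] [[|[|//]]] ?; rewrite !mxE !big_ord_recl !big_ord0 !mxE /=;
  arith; done.

Lemma pauli1_mul a b : exists c a', c != 0 /\ pauli1 a *m pauli1 b = c *: pauli1 a'.
Proof.
have n1 : (1 : algC) != 0 by rewrite oner_eq0.
have ni : ('i : algC) != 0 by rewrite neq0Ci.
have nmi : (- 'i : algC) != 0 by rewrite oppr_eq0 neq0Ci.
case: a => [[|[|[|[|//]]]] ?]; case: b => [[|[|[|[|//]]]] ?];
rewrite /pauli1 /pX /pY /pZ /=;
first [ exists 1, (@Ordinal 4 0 isT); split=> //=; mx2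
      | exists 1, (@Ordinal 4 1 isT); split=> //=; mx2
      | exists 1, (@Ordinal 4 2 isT); split=> //=; mx2
      | exists 1, (@Ordinal 4 3 isT); split=> //=; mx2
      | exists 'i, (@Ordinal 4 1 isT); split=> //=; mx2
      | exists 'i, (@Ordinal 4 2 isT); split=> //=; mx2
      | exists 'i, (@Ordinal 4 3 isT); split=> //=; mx2
      | exists (-'i), (@Ordinal 4 1 isT); split=> //=; mx2
      | exists (-'i), (@Ordinal 4 2 isT); split=> //=; mx2
      | exists (-'i), (@Ordinal 4 3 isT); split=> //=; mx2 ].
Qed.

Lemma pauli1_tr a b : \tr (pauli1 a *m pauli1 b) = if a == b then 2 else 0.
Proof.
case: a => [[|[|[|[|//]]]] ?]; case: b => [[|[|[|[|//]]]] ?];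
rewrite /pauli1 /pX /pY /pZ /= /mxtrace !big_ord_recl !big_ord0 !mxE !big_ord_recl !big_ord0 !mxE /=;
arith; rewrite ?addrN ?addNr //.
Qed.

Lemma pauli1_tr1 a : \tr (pauli1 a) = if a == ord0 then 2 else 0.
Proof.
case: a => [[|[|[|[|//]]]] ?];
rewrite /pauli1 /pX /pY /pZ /= /mxtrace !big_ord_recl !big_ord0 !mxE /=;
arith; rewrite ?addrN //.
Qed.

Lemma pauli1_gen a : in_gen1 (pauli1 a).
Proof.
case: a => [[|[|[|[|//]]]] ?]; rewrite /pauli1 /=.
- have -> : (1%:M : 'M[algC]_2) = pX *m pX by rewrite /pX; mx2.
  by apply: gen1M; constructor.
- by constructor.
- have -> : pY = 'i%:M *m (pX *m pZ).
    by rewrite /pX /pY /pZ; apply/matrixP=> [[[|[|//]]] ?] [[|[|//]]] ?;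
    rewrite !mxE !big_ord_recl !big_ord0 !mxE !big_ord_recl !big_ord0 !mxE /=; arith.
  by repeat constructor.
- by constructor.
Qed.

Lemma gen1_dec M : in_gen1 M -> exists c a, c != 0 /\ M = c *: pauli1 a.
Proof.
elim=> [|||A B _ [c1 [a1 [h1 ->]]] _ [c2 [a2 [h2 ->]]]].
- by exists 1, (@Ordinal 4 1 isT); rewrite scale1r oner_eq0.
- by exists 1, (@Ordinal 4 3 isT); rewrite scale1r oner_eq0.
- exists 'i, ord0; rewrite neq0Ci; split=> //.
  by rewrite /pauli1 /= scalemx1.
- have [c [a [hc e]]] := pauli1_mul a1 a2.
  exists (c1 * c2 * c), a; rewrite !mulf_neq0 //; split=> //.
  by rewrite -scalemxAl -scalemxAr e !scalerA.
Qed.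
Lemma castmx_mulsq n m (e : n = m) (A B : 'M[algC]_n) :
  castmx (e,e) (A *m B) = castmx (e,e) A *m castmx (e,e) B.
Proof. by case: m / e. Qed.
Lemma castmx_scale n m (e : n = m) c (A : 'M[algC]_n) :
  castmx (e,e) (c *: A) = c *: castmx (e,e) A.
Proof. by case: m / e. Qed.
Lemma castmx_tr n m (e : n = m) (A : 'M[algC]_n) : \tr (castmx (e,e) A) = \tr A.
Proof. by case: m / e. Qed.

Lemma tensmxZZ m n p r c d (A : 'M[algC]_(m,n)) (B : 'M[algC]_(p,r)) :
  (c *: A) *t (d *: B) = (c * d) *: (A *t B).
Proof. by apply/matrixP=> i j; rewrite !mxE mulrACA. Qed.

Lemma tensmx_tr m n (A : 'M[algC]_m) (B : 'M[algC]_n) : \tr (A *t B) = \tr A * \tr B.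
Proof.
rewrite /mxtrace (reindex (@mxtens_index m n)) /=; last first.
  exact: (onW_bij _ (Bijective (@mxtens_indexK m n) (@mxtens_unindexK m n))).
symmetry; rewrite big_distrlr /=.
rewrite pair_big /=; apply: eq_bigr => [[i j]] _; by rewrite tensmxE.
Qed.

Lemma tens_ext q f g : (forall n, (n < q)%N -> f n = g n) -> tens q f = tens q g.
Proof.
elim: q f g => [|q IH] f g H //=.
by rewrite H // (IH (fun n => f n.+1) (fun n => g n.+1)) // => n hn; apply: H.
Qed.

Lemma tens_mul q f g : tens q f *m tens q g = tens q (fun n => f n *m g n).
Proof.
elim: q f g => [|q IH] f g /=; first by rewrite mul1mx.
by rewrite -castmx_mulsq tensmx_mul IH.
Qed.

Lemma tens_tr q f : \tr (tens q f) = \prod_(i < q) \tr (f i).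
Proof.
elim: q f => [|q IH] f /=; first by rewrite big_ord0 mxtrace1.
by rewrite castmx_tr tensmx_tr IH big_ord_recl.
Qed.

Lemma tensZ q c f : tens q (fun n => c n *: f n) = (\prod_(i < q) c i) *: tens q f.
Proof.
elim: q c f => [|q IH] c f /=; first by rewrite big_ord0 scale1r.
by rewrite IH -castmx_scale tensmxZZ big_ord_recl.
Qed.

Lemma ppE q (p : {ffun 'I_q -> 'I_4}) (i : 'I_q) : odflt ord0 (omap p (insub (val i))) = p i.
Proof. by rewrite valK. Qed.

Lemma pstr_tr2 q (p p' : {ffun 'I_q -> 'I_4}) :
  \tr (pstr p *m pstr p') = if p == p' then (2 ^ q)%:R else 0.
Proof.
rewrite /pstr tens_mul tens_tr.
under eq_bigr => i _ do rewrite ppE ppE pauli1_tr.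
case: eqP => [->|ne].
  by rewrite (eq_bigr (fun _ => 2)) ?prodr_const ?card_ord ?natrX // => i _; rewrite eqxx.
have [i hi] : exists i, p i != p' i.
  apply/existsP; apply: contra_notT ne => /existsPn h; apply/ffunP => i.
  by apply/eqP; move: (h i); rewrite negbK.
by rewrite (bigD1 i) //= (negbTE hi) mul0r.
Qed.

Lemma pstr_tr1 q (p : {ffun 'I_q -> 'I_4}) :
  \tr (pstr p) = if p == pid q then (2 ^ q)%:R else 0.
Proof.
rewrite /pstr tens_tr.
under eq_bigr => i _ do rewrite ppE pauli1_tr1.
case: eqP => [->|ne].
  by rewrite (eq_bigr (fun _ => 2)) ?prodr_const ?card_ord ?natrX // => i _; rewrite ffunE eqxx.
have [i hi] : exists i, p i != ord0.
  apply/existsP; apply: contra_notT ne => /existsPn h; apply/ffunP => i.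
  by rewrite ffunE; apply/eqP; move: (h i); rewrite negbK.
by rewrite (bigD1 i) //= (negbTE hi) mul0r.
Qed.

Lemma gen_decomp q f : (forall j, (j < q)%N -> in_gen1 (f j)) ->
  exists c (p : {ffun 'I_q -> 'I_4}), c != 0 /\ tens q f = c *: pstr p.
Proof.
move=> hf.
have : forall j : 'I_q, exists ca : algC * 'I_4, ca.1 != 0 /\ f j = ca.1 *: pauli1 ca.2.
  move=> j; have [c [a [hc e]]] := gen1_dec (hf j (ltn_ord j)).
  by exists (c, a).
case/fin_all_exists=> g hg.
exists (\prod_(i < q) (g i).1), [ffun i => (g i).2]; split.
  by apply/prodf_neq0 => i _; case: (hg i).
pose c n := odflt 1 (omap (fun i => (g i).1) (insub n)).
have -> : \prod_(i < q) (g i).1 = \prod_(i < q) c i.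
  by apply: eq_bigr => i _; rewrite /c valK.
rewrite /pstr -tensZ; apply: tens_ext => n hn.
have -> : n = val (Ordinal hn) by [].
by rewrite /c valK /= ffunE; case: (hg (Ordinal hn)).
Qed.

Lemma adjmM m n p (A : 'M[algC]_(m,n)) (B : 'M[algC]_(n,p)) : adjm (A *m B) = adjm B *m adjm A.
Proof. by rewrite /adjm map_mxM trmx_mul. Qed.

Lemma adjmT m n p r (A : 'M[algC]_(m,n)) (B : 'M[algC]_(p,r)) : adjm (A *t B) = adjm A *t adjm B.
Proof. by rewrite /adjm map_mxT trmx_tens. Qed.

Definition cj q (C : 'M[algC]_(2 ^ q)) X := C *m X *m adjm C.

Lemma phi2T q (C : 'M[algC]_(2 ^ q)) A B : phi2 C (A *t B) = cj C A *t cj C B.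
Proof. by rewrite /phi2 adjmT !tensmx_mul. Qed.

Lemma phi2Z q (C : 'M[algC]_(2 ^ q)) c X : phi2 C (c *: X) = c *: phi2 C X.
Proof. by rewrite /phi2 -scalemxAr -scalemxAl. Qed.
Lemma phi2D q (C : 'M[algC]_(2 ^ q)) X Y : phi2 C (X + Y) = phi2 C X + phi2 C Y.
Proof. by rewrite /phi2 mulmxDr mulmxDl. Qed.
Lemma phi2B q (C : 'M[algC]_(2 ^ q)) X Y : phi2 C (X - Y) = phi2 C X - phi2 C Y.
Proof. by rewrite /phi2 mulmxBr mulmxBl. Qed.

Lemma span_inv q (C : 'M[algC]_(2 ^ q)) (S : seq 'M[algC]_(2 ^ q * 2 ^ q)) :
  (forall g, g \in S -> phi2 C g \in <<S>>%VS) -> phi_invariant C <<S>>%VS.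
Proof.
move=> H X /(@coord_span _ _ _ (in_tuple S)) ->.
rewrite /phi2 mulmx_sumr mulmx_suml; apply: memv_suml => i _.
rewrite -scalemxAr -scalemxAl; apply: memvZ; apply: H.
by rewrite mem_nth.
Qed.

Lemma SmxZ q a b (x y : 'M[algC]_(2 ^ q)) : Smx (a *: x) (b *: y) = (a * b) *: Smx x y.
Proof. by rewrite /Smx !tensmxZZ [b * a]mulrC -scalerDr !scalerA mulrC. Qed.
Lemma AmxZ q a b (x y : 'M[algC]_(2 ^ q)) : Amx (a *: x) (b *: y) = (a * b) *: Amx x y.
Proof. by rewrite /Amx !tensmxZZ [b * a]mulrC -scalerBr !scalerA mulrC. Qed.
Lemma phi2S q (C : 'M[algC]_(2 ^ q)) x y : phi2 C (Smx x y) = Smx (cj C x) (cj C y).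
Proof. by rewrite /Smx phi2Z phi2D !phi2T. Qed.
Lemma phi2A q (C : 'M[algC]_(2 ^ q)) x y : phi2 C (Amx x y) = Amx (cj C x) (cj C y).
Proof. by rewrite /Amx phi2Z phi2B !phi2T. Qed.

Lemma k_neq0 q : (sqrtC (Defs.dim q))^-1 != 0.
Proof. by rewrite invr_eq0 sqrtC_eq0 /Defs.dim pnatr_eq0 expn_eq0. Qed.

Lemma d_neq0 q : ((2 ^ q)%:R : algC) != 0.
Proof. by rewrite pnatr_eq0 expn_eq0. Qed.

Lemma sigma_indep q (a b : {ffun 'I_q -> 'I_4}) ca cb :
  a != b -> ca *: sigma a = cb *: sigma b -> cb = 0.
Proof.
move=> ab e; have := congr1 (fun M => \tr (M *m pstr b)) e.
rewrite /sigma /= -!scalemxAl !mxtraceZ !pstr_tr2 (negbTE ab) eqxx mulr0 mulr0.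
move/esym/eqP; rewrite !mulf_eq0 (negbTE (k_neq0 q)) (negbTE (d_neq0 q)) orbF.
by rewrite orbF => /eqP.
Qed.

Lemma mem_nonid q (s : {ffun 'I_q -> 'I_4}) : (s \in nonid q) = (s != pid q).
Proof. by rewrite mem_filter mem_enum andbT. Qed.

Section Cl.
Variables (q : nat) (C : 'M[algC]_(2 ^ q)) (hC : clifford C).

Lemma CCa : C *m adjm C = 1%:M. Proof. by case: hC. Qed.
Lemma CaC : adjm C *m C = 1%:M. Proof. exact: mulmx1C CCa. Qed.

Lemma cjM A B : cj C (A *m B) = cj C A *m cj C B.
Proof. by rewrite /cj !mulmxA -(mulmxA _ (adjm C) C) CaC mulmx1. Qed.
Lemma cjZ c A : cj C (c *: A) = c *: cj C A.
Proof. by rewrite /cj -scalemxAr -scalemxAl. Qed.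
Lemma cjD A B : cj C (A + B) = cj C A + cj C B.
Proof. by rewrite /cj mulmxDr mulmxDl. Qed.
Lemma cj_inj A B : cj C A = cj C B -> A = B.
Proof.
move=> e; have := congr1 (fun M => adjm C *m M *m C) e.
by rewrite /cj !mulmxA CaC !mul1mx -!mulmxA CaC !mulmx1.
Qed.
Lemma cj_tr A : \tr (cj C A) = \tr A.
Proof. by rewrite /cj mxtrace_mulC mulmxA CaC mul1mx. Qed.
Lemma cj_sigma0 : cj C (sigma0 q) = sigma0 q.
Proof. by rewrite /sigma0 cjZ /cj mulmx1 CCa. Qed.

Lemma conj_sigma s : s \in nonid q -> exists c s', [/\ c != 0, s' \in nonid q &
  cj C (sigma s) = c *: sigma s'].
Proof.
move=> hs.
have hP : pauli_group (pstr s).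
  by exists (fun n => pauli1 (odflt ord0 (omap s (insub n)))); split => // j _; apply: pauli1_gen.
have [f [hf e]] := hC.2 _ hP.
have [c [p [hc e2]]] := gen_decomp hf.
have E : cj C (sigma s) = c *: sigma p.
  by rewrite /sigma cjZ /cj e e2 !scalerA mulrC.
exists c, p; split => //.
rewrite mem_nonid; apply/eqP => ep.
have := congr1 mxtrace E; rewrite cj_tr /sigma !mxtraceZ !pstr_tr1 ep eqxx.
move: hs; rewrite mem_nonid => /negbTE ->; rewrite mulr0 => /esym/eqP.
by rewrite !mulf_eq0 (negbTE hc) (negbTE (k_neq0 q)) (negbTE (d_neq0 q)).
Qed.


Lemma cj0 : cj C 0 = 0.
Proof. by rewrite /cj mulmx0 mul0mx. Qed.

Lemma pair_inv (G : 'M[algC]_(2 ^ q) -> 'M[algC]_(2 ^ q) -> 'M[algC]_(2 ^ q * 2 ^ q))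
  (P : 'M[algC]_(2 ^ q) -> 'M[algC]_(2 ^ q) -> bool) :
  (forall a b x y, G (a *: x) (b *: y) = (a * b) *: G x y) ->
  (forall x y, phi2 C (G x y) = G (cj C x) (cj C y)) ->
  (forall s t s' t' cs ct, cs != 0 -> ct != 0 -> cj C (sigma s) = cs *: sigma s' ->
     cj C (sigma t) = ct *: sigma t' -> P (sigma s) (sigma t) -> P (sigma s') (sigma t')) ->
  phi_invariant C <<[seq G (sigma s) (sigma t) | t <- nonid q,
       s <- [seq s <- nonid q | P (sigma s) (sigma t)]]>>%VS.
Proof.
move=> GZ Gphi HP; apply: span_inv => g /allpairsPdep [t [s [ht hs ->]]].
move: hs; rewrite mem_filter => /andP [hp hs].
have [cs [s' [hcs hs' es]]] := conj_sigma hs.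
have [ct [t' [hct ht' et]]] := conj_sigma ht.
rewrite Gphi es et GZ; apply: memvZ; apply: memv_span.
apply/allpairsPdep; exists t', s'; split => //.
by rewrite mem_filter hs' (HP s t s' t' cs ct).
Qed.

Lemma anti_pres s t s' t' cs ct : cs != 0 -> ct != 0 -> cj C (sigma s) = cs *: sigma s' ->
     cj C (sigma t) = ct *: sigma t' -> anticommutes (sigma s) (sigma t) ->
     anticommutes (sigma s') (sigma t').
Proof.
move=> hcs hct es et; rewrite /anticommutes => /eqP h.
have := congr1 (cj C) h; rewrite cjD !cjM es et cj0.
move: (sigma s') (sigma t') => x y.
rewrite -!scalemxAl -!scalemxAr !scalerA [ct * cs]mulrC -scalerDr => /eqP.
by rewrite scaler_eq0 mulf_eq0 (negbTE hcs) (negbTE hct).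
Qed.

Lemma comm_pres s t s' t' cs ct : cs != 0 -> ct != 0 -> cj C (sigma s) = cs *: sigma s' ->
     cj C (sigma t) = ct *: sigma t' -> commutes_ne (sigma s) (sigma t) ->
     commutes_ne (sigma s') (sigma t').
Proof.
move=> hcs hct es et /andP [ne /eqP h]; apply/andP; split.
  apply/eqP => e'.
  have : cj C (ct *: sigma s) = cj C (cs *: sigma t).
    rewrite (cjZ ct) (cjZ cs) es et e' !scalerA mulrC.
  by congr (_ *: _); rewrite mulrC [ct * cs]mulrC.
  move/cj_inj => e2.
  have st : s != t by apply: contraNneq ne => ->.
  have cs0 := sigma_indep st e2.
  by rewrite cs0 eqxx in hcs.
have := congr1 (cj C) h; rewrite !cjM es et.
move: (sigma s') (sigma t') => x y.
rewrite -!scalemxAl -!scalemxAr !scalerA [ct * cs]mulrC.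
by move/(scalerI (mulf_neq0 hcs hct)) ->.
Qed.

End Cl.

Lemma tensmxZr m n p r c (A : 'M[algC]_(m,n)) (B : 'M[algC]_(p,r)) :
  A *t (c *: B) = c *: (A *t B).
Proof. by apply/matrixP=> i j; rewrite !mxE mulrCA. Qed.
Lemma tensmxZl m n p r c (A : 'M[algC]_(m,n)) (B : 'M[algC]_(p,r)) :
  (c *: A) *t B = c *: (A *t B).
Proof. by apply/matrixP=> i j; rewrite !mxE mulrA. Qed.

Unset Implicit Arguments.
Set Strict Implicit.

Theorem lemma3 (q : nat) (hq : (0 < q)%N) (C : 'M[algC]_(2 ^ q)) (hC : clifford C) :
  phi_invariant C (Vid q) /\ phi_invariant C (Vr q) /\ phi_invariant C (Vl q) /\
  phi_invariant C (Vd q) /\ phi_invariant C (VSc q) /\ phi_invariant C (VSa q) /\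
  phi_invariant C (VAc q) /\ phi_invariant C (VAa q).
Proof.
split.
  apply: span_inv => g; rewrite inE => /eqP ->.
  by rewrite phi2T cj_sigma0 // memv_span // inE.
split.
  apply: span_inv => g /mapP [t ht ->].
  have [ct [t' [hct ht' et]]] := conj_sigma hC ht.
  rewrite phi2T cj_sigma0 // et tensmxZr; apply: memvZ; apply: memv_span.
  by apply/mapP; exists t'.
split.
  apply: span_inv => g /mapP [t ht ->].
  have [ct [t' [hct ht' et]]] := conj_sigma hC ht.
  rewrite phi2T cj_sigma0 // et tensmxZl; apply: memvZ; apply: memv_span.
  by apply/mapP; exists t'.
split.
  apply: span_inv => g /mapP [t ht ->].
  have [ct [t' [hct ht' et]]] := conj_sigma hC ht.
  rewrite phi2T et tensmxZZ; apply: memvZ; apply: memv_span.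
  by apply/mapP; exists t'.
split; first exact: (pair_inv hC (@SmxZ q) (@phi2S q C) (comm_pres hC)).
split; first exact: (pair_inv hC (@SmxZ q) (@phi2S q C) (anti_pres hC)).
split; first exact: (pair_inv hC (@AmxZ q) (@phi2A q C) (comm_pres hC)).
exact: (pair_inv hC (@AmxZ q) (@phi2A q C) (anti_pres hC)).
Qed.
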